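(* Let $0<\alpha<1$. Let $(x(t))_{t\ge 0}$ be a sequence of nonnegative reals (attempt rates of a station) and $(\bar{x}(t))_{t\ge0}$ a sequence of positive reals (fair attempt rates). Define $p(0)=0$ and, for $t\ge 0$, $$p(t+1)=\max\Big(0,\; p(t)+\alpha\Big(\tfrac{x(t)}{\bar{x}(t)}-1\Big)\Big),\qquad P_{NACK}(t)=\min\{p(t),1\}.$$ Suppose the normalised attempt rate depends on the acknowledgement-suppression probability through a function $h:[0,1]\to\mathbb{R}$, i.e. $x(t)/\bar{x}(t)=h(P_{NACK}(t))$ for all $t$, where: (i) $h(0)>1$; (ii) $h(1)<1$; (iii) $h$ is strictly decreasing and Lipschitz with a Lipschitz constant smaller than $2/\alpha$. Then the algorithm converges to a point where $x(t)=\bar{x}(t)$; that is, $p(t)\to P$ where $P$ is the unique point of $[0,1]$ with $h(P)=1$, and hence $x(t)/\bar{x}(t)\to 1$.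
   Context: $p(t)$ is the accumulated penalty of a (moderately misbehaving) station under an access-point policing algorithm, and $P_{NACK}(t)$ is the probability with which the access point suppresses acknowledgements of that station's frames at step $t$. *)

(* Defs.v *)
From Stdlib Require Import Reals.
Open Scope R_scope.

Fixpoint penalty (alpha : R) (x xbar : nat -> R) (t : nat) : R :=
  match t with
  | O => 0
  | S t' => Rmax 0 (penalty alpha x xbar t' + alpha * (x t' / xbar t' - 1))
  end.

Definition p_nack (alpha : R) (x xbar : nat -> R) (t : nat) : R :=
  Rmin (penalty alpha x xbar t) 1.

(* Main.v *)
Require Import Defs.
From Stdlib Require Import Reals Lra Lia.
Open Scope R_scope.

Lemma clamp_lip a b : Rabs (Rmax 0 (Rmin a 1) - Rmax 0 (Rmin b 1)) <= Rabs (a - b).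
Proof. unfold Rmax, Rmin; repeat destruct Rle_dec; unfold Rabs; repeat destruct Rcase_abs; lra. Qed.

Lemma min_lip p P : 0 <= P <= 1 -> Rabs (Rmin p 1 - P) <= Rabs (p - P).
Proof. intros. unfold Rmin; repeat destruct Rle_dec; unfold Rabs; repeat destruct Rcase_abs; lra. Qed.

Lemma max_proj y P : 0 <= P -> Rabs (Rmax 0 y - P) <= Rabs (y - P).
Proof. intros. unfold Rmax; repeat destruct Rle_dec; unfold Rabs; repeat destruct Rcase_abs; lra. Qed.

Lemma exP (h : R -> R) L (HL0 : 0 <= L)
  (Hl : forall a b, 0 <= a <= 1 -> 0 <= b <= 1 -> Rabs (h a - h b) <= L * Rabs (a - b))
  (Hh0 : h 0 > 1) (Hh1 : h 1 < 1) : exists P, 0 <= P <= 1 /\ h P = 1.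
Proof.
set (cl := fun z => Rmax 0 (Rmin z 1)).
assert (Hcl : forall z, 0 <= cl z <= 1) by (intros; unfold cl, Rmax, Rmin; repeat destruct Rle_dec; lra).
assert (Hcont : continuity (fun z => 1 - h (cl z))).
{ intros z0. unfold continuity_pt, continue_in, limit1_in, limit_in. intros eps Heps.
  exists (eps/(L+1)). split. apply Rdiv_lt_0_compat; lra.
  intros y [_ Hy]. simpl in *. unfold Rdist in *.
  replace (1 - h (cl y) - (1 - h (cl z0))) with (h (cl z0) - h (cl y)) by ring.
  eapply Rle_lt_trans. apply Hl; apply Hcl.
  eapply Rle_lt_trans. apply Rmult_le_compat_l. lra.
  rewrite Rabs_minus_sym. apply clamp_lip.
  apply Rle_lt_trans with (L * (eps/(L+1))).
  apply Rmult_le_compat_l; lra.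
  apply Rmult_lt_reg_r with (L+1). lra.
  replace (L * (eps / (L + 1)) * (L + 1)) with (L*eps) by (field; lra). nra. }
assert (E0 : cl 0 = 0) by (unfold cl, Rmax, Rmin; repeat destruct Rle_dec; lra).
assert (E1 : cl 1 = 1) by (unfold cl, Rmax, Rmin; repeat destruct Rle_dec; lra).
destruct (IVT _ 0 1 Hcont) as [z [Hz Hfz]]; try lra.
- rewrite E0; lra.
- rewrite E1; lra.
- exists z. split; [lra|].
  assert (cl z = z) by (unfold cl, Rmax, Rmin; repeat destruct Rle_dec; lra).
  rewrite H in Hfz; lra.
Qed.

Theorem theorem2 (alpha : R) (x xbar : nat -> R) (h : R -> R)
  (Halpha : 0 < alpha < 1)
  (Hx : forall t, 0 <= x t)
  (Hxbar : forall t, 0 < xbar t)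
  (Hh : forall t, x t / xbar t = h (p_nack alpha x xbar t))
  (Hh0 : h 0 > 1)
  (Hh1 : h 1 < 1)
  (Hdec : forall a b, 0 <= a -> a < b -> b <= 1 -> h b < h a)
  (Hlip : exists L, 0 <= L /\ L < 2 / alpha /\
          forall a b, 0 <= a <= 1 -> 0 <= b <= 1 ->
            Rabs (h a - h b) <= L * Rabs (a - b)) :
  exists P : R,
    (0 <= P <= 1 /\ h P = 1) /\
    (forall Q, 0 <= Q <= 1 -> h Q = 1 -> Q = P) /\
    Un_cv (penalty alpha x xbar) P /\
    Un_cv (fun t => x t / xbar t) 1.
Proof.
destruct Hlip as [L [HL0 [HL2 Hl]]].
assert (HaL : alpha * L < 2).
{ apply Rmult_lt_compat_l with (r:=alpha) in HL2; [|lra].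
  replace (alpha * (2/alpha)) with 2 in HL2 by (field; lra). lra. }
assert (Hmono : forall a b, 0 <= a -> a <= b -> b <= 1 -> h b <= h a).
{ intros a b H1 H2 H3. destruct (Req_dec a b) as [->|]; [lra|]. left; apply Hdec; lra. }
destruct (exP h L HL0 Hl Hh0 Hh1) as [P [HP HhP]].
assert (HP0 : 0 < P). { destruct HP as [[|E] _]; [lra|]. rewrite <- E in HhP; lra. }
assert (HP1 : P < 1). { destruct HP as [_ [|E]]; [lra|]. rewrite E in HhP; lra. }
set (p := penalty alpha x xbar).
assert (Hpos : forall t, 0 <= p t).
{ intros [|t]; unfold p; simpl; [lra|]. apply Rmax_l. }
set (G := fun q => h (Rmin q 1) - 1).
assert (Hstep : forall t, p (S t) = Rmax 0 (p t + alpha * G (p t))).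
{ intros t. unfold p; simpl. rewrite Hh. reflexivity. }
assert (Hmin : forall q, 0 <= q -> 0 <= Rmin q 1 <= 1)
  by (intros; unfold Rmin; destruct Rle_dec; lra).
assert (Ga : forall q, 0 <= q -> Rabs (G q) <= L * Rabs (q - P)).
{ intros q Hq. unfold G. rewrite <- HhP at 2.
  eapply Rle_trans. apply Hl; [apply Hmin; lra| lra].
  apply Rmult_le_compat_l; [lra|]. apply min_lip; lra. }
assert (Gneg : forall q, P <= q -> G q <= 0).
{ intros q Hq. unfold G. assert (h (Rmin q 1) <= h P); [|lra].
  apply Hmono; try lra; unfold Rmin; destruct Rle_dec; lra. }
assert (Gpos : forall q, 0 <= q -> q <= P -> 0 <= G q).
{ intros q H1 Hq. unfold G. assert (h P <= h (Rmin q 1)); [|lra].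
  rewrite Rmin_left by lra. apply Hmono; lra. }
assert (Step1 : forall q, 0 <= q -> Rabs (q + alpha * G q - P) <= Rabs (q - P)).
{ intros q Hq. specialize (Ga q Hq).
  destruct (Rle_dec P q).
  - specialize (Gneg q r). rewrite (Rabs_right (q-P)) in * by lra.
    rewrite Rabs_left1 in Ga by lra.
    assert (alpha * (L * (q-P)) <= 2 * (q - P)) by nra.
    unfold Rabs; destruct Rcase_abs; nra.
  - specialize (Gpos q Hq ltac:(lra)). rewrite (Rabs_left (q-P)) in * by lra.
    rewrite Rabs_right in Ga by lra.
    assert (alpha * (L * - (q-P)) <= 2 * - (q - P)) by nra.
    unfold Rabs; destruct Rcase_abs; nra. }
assert (Step2 : forall c, 0 < c -> exists d, 0 < d /\ forall q, 0 <= q -> c <= Rabs (q - P) ->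
          Rabs (q + alpha * G q - P) <= Rabs (q - P) - d).
{ intros c Hc.
  set (m1 := 1 - h (Rmin (P + c) 1)).
  set (m2 := h (Rmax 0 (P - c)) - 1).
  assert (Hm1 : 0 < m1).
  { unfold m1. assert (h (Rmin (P+c) 1) < h P); [|lra].
    apply Hdec; try lra; unfold Rmin; destruct Rle_dec; lra. }
  assert (Hm2 : 0 < m2).
  { unfold m2. assert (h P < h (Rmax 0 (P - c))); [|lra].
    apply Hdec; try lra; unfold Rmax; destruct Rle_dec; lra. }
  exists (Rmin (alpha * Rmin m1 m2) ((2 - alpha * L) * c)).
  split.
  { apply Rmin_glb_lt; [apply Rmult_lt_0_compat; [lra| apply Rmin_glb_lt; lra]|].
    apply Rmult_lt_0_compat; lra. }
  assert (Hd1 := Rmin_l (alpha * Rmin m1 m2) ((2 - alpha * L) * c)).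
  assert (Hd2 := Rmin_r (alpha * Rmin m1 m2) ((2 - alpha * L) * c)).
  assert (Hm1' : alpha * Rmin m1 m2 <= alpha * m1)
    by (apply Rmult_le_compat_l; [lra| apply Rmin_l]).
  assert (Hm2' : alpha * Rmin m1 m2 <= alpha * m2)
    by (apply Rmult_le_compat_l; [lra| apply Rmin_r]).
  set (d := Rmin (alpha * Rmin m1 m2) ((2 - alpha * L) * c)) in *.
  intros q Hq Hc'. specialize (Ga q Hq).
  destruct (Rle_dec P q).
  - rewrite (Rabs_right (q-P)) in * by lra.
    assert (G q <= - m1).
    { unfold G, m1. assert (h (Rmin q 1) <= h (Rmin (P + c) 1)); [|lra].
      apply Hmono; unfold Rmin; repeat destruct Rle_dec; lra. }
    rewrite Rabs_left1 in Ga by lra.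
    assert ((2 - alpha * L) * c <= (2 - alpha*L) * (q-P)) by (apply Rmult_le_compat_l; lra).
    assert (alpha * G q <= - (alpha * m1)) by nra.
    unfold Rabs; destruct Rcase_abs; nra.
  - rewrite (Rabs_left (q-P)) in * by lra.
    assert (G q >= m2).
    { unfold G, m2. rewrite Rmin_left by lra. assert (h (Rmax 0 (P - c)) <= h q); [|lra].
      apply Hmono; unfold Rmax; repeat destruct Rle_dec; lra. }
    rewrite Rabs_right in Ga by lra.
    assert ((2 - alpha * L) * c <= (2 - alpha*L) * - (q-P)) by (apply Rmult_le_compat_l; lra).
    assert (alpha * G q >= alpha * m2) by nra.
    unfold Rabs; destruct Rcase_abs; nra. }
assert (Hcv : Un_cv p P).
{ intros eps Heps. destruct (Step2 eps Heps) as [d [Hd Hdec2]].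
  set (V0 := Rabs (p 0%nat - P)).
  assert (Hinv : forall n, Rabs (p n - P) < eps \/ Rabs (p n - P) <= V0 - INR n * d).
  { induction n as [|n IH].
    - right. simpl. unfold V0. lra.
    - rewrite Hstep. assert (A := max_proj (p n + alpha * G (p n)) P ltac:(lra)).
      assert (B := Step1 (p n) (Hpos n)).
      destruct (Rlt_dec (Rabs (p n - P)) eps).
      + left. lra.
      + right. assert (C := Hdec2 (p n) (Hpos n) ltac:(lra)).
        destruct IH as [|IH]; [lra|]. rewrite S_INR. lra. }
  assert (HV0 : 0 <= V0) by apply Rabs_pos.
  destruct (archimed_cor1 (d / (V0 + 1))) as [N [HN HN0]].
  { apply Rdiv_lt_0_compat; lra. }
  exists N. intros n Hn.
  assert (HNpos : 0 < INR N) by (apply lt_0_INR; lia).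
  assert (HNd : V0 + 1 <= INR N * d).
  { apply Rmult_lt_compat_l with (r := INR N * (V0+1)) in HN; [|nra].
    replace (INR N * (V0 + 1) * / INR N) with (V0+1) in HN by (field; lra).
    replace (INR N * (V0 + 1) * (d / (V0 + 1))) with (INR N * d) in HN by (field; lra).
    lra. }
  assert (INR N <= INR n) by (apply le_INR; lia).
  unfold Rdist. destruct (Hinv n) as [|H2]; [assumption|].
  assert (INR N * d <= INR n * d) by nra.
  assert (0 <= Rabs (p n - P)) by apply Rabs_pos. lra. }
exists P. split; [split; assumption|]. split.
{ intros Q HQ HhQ. destruct (Rtotal_order Q P) as [H|[H|H]]; auto.
  - assert (h P < h Q) by (apply Hdec; lra). lra.
  - assert (h Q < h P) by (apply Hdec; lra). lra. }
split; [exact Hcv|].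
intros eps Heps. destruct (Hcv (eps / (L+1))) as [N HN].
{ apply Rdiv_lt_0_compat; lra. }
exists N. intros n Hn. specialize (HN n Hn). unfold Rdist in *.
rewrite Hh. unfold p_nack. fold p.
assert (A := Ga (p n) (Hpos n)). unfold G in A.
apply Rle_lt_trans with (L * Rabs (p n - P)); [exact A|].
apply Rle_lt_trans with (L * (eps/(L+1))).
apply Rmult_le_compat_l; lra.
apply Rmult_lt_reg_r with (L+1). lra.
replace (L * (eps / (L + 1)) * (L + 1)) with (L*eps) by (field; lra). nra.
Qed.
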